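(* Let $r_1 \ge 2$ and $x_1 \ge 1$ be integers, let $d = x_1 + r_1 - 1$, and let $\mathbf{q} \in \mathbb{Z}^d$ be the vector whose first $x_1$ entries equal $r_1$ and whose last $r_1-1$ entries equal $1 + r_1 x_1$. Let $\Delta_{(1,\mathbf{q})} = \mathrm{conv}\{\mathbf{e}_1,\ldots,\mathbf{e}_d,-\mathbf{q}\} \subset \mathbb{R}^d$. For $\mathbf{t} = (t_1,\ldots,t_d) \in \mathbb{R}^d$ define \[ \lambda_k(\mathbf{t}) = \begin{cases} \sum_{j \ne k} t_j - x_1 r_1 t_k, & 1 \le k \le x_1,\\ \sum_{j\ne k} t_j - (r_1-1) t_k, & x_1+1 \le k \le d,\\ \sum_{j=1}^d t_j, & k = d+1,\end{cases} \] where the sums over $j$ range over $1 \le j \le d$. Then the inequalities $\lambda_k(\mathbf{t}) \le 1$ for $1 \le k \le d+1$ form an irredundant $\mathcal{H}$-description of $\Delta_{(1,\mathbf{q})}$.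
   Context: $\mathbf{e}_i$ is the $i$-th standard basis vector of $\mathbb{R}^d$. *)

(* Defs.v *)
From HB Require Import structures.
From mathcomp Require Import all_boot all_order all_algebra.
From mathcomp Require Import reals.
Set Implicit Arguments. Unset Strict Implicit. Unset Printing Implicit Defensive.
Import Order.TTheory GRing.Theory Num.Theory.
Local Open Scope ring_scope.

Definition dimq (r1 x1 : nat) : nat := (x1 + r1 - 1)%N.

Definition in_conv (R : realType) (I : finType) (n : nat)
    (P : I -> 'rV[R]_n) (t : 'rV[R]_n) : Prop :=
  exists w : I -> R, (forall i, 0 <= w i) /\ \sum_i w i = 1 /\
                     t = \sum_i w i *: P i.

Definition qvec (R : realType) (r1 x1 : nat) : 'rV[R]_(dimq r1 x1) :=
  \row_(j < dimq r1 x1) (if (j < x1)%N then r1%:R else (1 + r1 * x1)%:R).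

Definition vertq (R : realType) (r1 x1 : nat) (v : option 'I_(dimq r1 x1))
    : 'rV[R]_(dimq r1 x1) :=
  match v with
  | Some j => delta_mx 0 j
  | None => - qvec R r1 x1
  end.

(* the d+1 linear forms; Some k (k : 'I_d, 0-based) is lambda_{k+1},
   None is lambda_{d+1} *)
Definition lam (R : realType) (r1 x1 : nat) (k : option 'I_(dimq r1 x1))
    (t : 'rV[R]_(dimq r1 x1)) : R :=
  match k with
  | Some k => \sum_(j < dimq r1 x1 | j != k) t 0 j
              - (if (k < x1)%N then (x1 * r1)%:R else (r1%:R - 1)) * t 0 k
  | None => \sum_(j < dimq r1 x1) t 0 j
  end.
Arguments qvec R r1 x1 : clear implicits.
Arguments vertq R r1 x1 v : clear implicits.
Arguments lam R r1 x1 k t : clear implicits.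

(* Main.v *)
Require Import Defs.
From HB Require Import structures.
From mathcomp Require Import all_boot all_order all_algebra.
From mathcomp Require Import reals.
From mathcomp Require Import ring lra zify.
Import Order.TTheory GRing.Theory Num.Theory.
Local Open Scope ring_scope.
Set Implicit Arguments.

Lemma big_opt (R : nmodType) (I : finType) (F : option I -> R) :
  \sum_i F i = F None + \sum_j F (Some j).
Proof.
rewrite (bigD1 None) //=; congr (_ + _).
rewrite (reindex_omap Some id) //=.
  by apply: eq_bigl => j; rewrite eqxx.
by case.
Qed.

Definition Ssum (R : realType) n (t : 'rV[R]_n) : R := \sum_j t 0 j.

Arguments Ssum {R n} t.

Definition cc (R : realType) (r1 x1 : nat) (k : 'I_(dimq r1 x1)) : R :=
  if (k < x1)%N then (x1 * r1)%:R else (r1%:R - 1).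

Definition MM (R : realType) (r1 x1 : nat) : R := (r1 * (1 + r1 * x1))%:R.

Lemma lamS (R : realType) r1 x1 k (t : 'rV[R]_(dimq r1 x1)) :
  lam R r1 x1 (Some k) t = Ssum t - (1 + cc R r1 x1 k) * t 0 k.
Proof. rewrite /lam /Ssum /cc [X in _ = X - _](bigD1 k) //=; ring. Qed.

Lemma lamN (R : realType) r1 x1 (t : 'rV[R]_(dimq r1 x1)) :
  lam R r1 x1 None t = Ssum t.
Proof. by []. Qed.

Lemma SsumZ (R : realType) n (a : R) (t : 'rV[R]_n) : Ssum (a *: t) = a * Ssum t.
Proof. by rewrite /Ssum mulr_sumr; apply: eq_bigr => j _; rewrite mxE. Qed.

Lemma SsumN (R : realType) n (t : 'rV[R]_n) : Ssum (- t) = - Ssum t.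
Proof. by rewrite /Ssum -sumrN; apply: eq_bigr => j _; rewrite mxE. Qed.

Lemma Ssum_delta (R : realType) n (j : 'I_n) : Ssum (delta_mx 0 j : 'rV[R]_n) = 1.
Proof.
rewrite /Ssum (bigD1 j) //= big1 ?addr0; first by rewrite mxE !eqxx.
by move=> i hi; rewrite mxE eqxx (negbTE hi).
Qed.

Lemma delta_entry (R : realType) n (j k : 'I_n) :
  (delta_mx 0 j : 'rV[R]_n) 0 k = (k == j)%:R.
Proof. by rewrite mxE eqxx. Qed.

Lemma qentry (R : realType) r1 x1 (j : 'I_(dimq r1 x1)) :
  qvec R r1 x1 0 j = (if (j < x1)%N then r1 else 1 + r1 * x1)%N%:R.
Proof. by rewrite mxE; case: ifP. Qed.

Lemma sumq (R : realType) r1 x1 (hr1 : (2 <= r1)%N) :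
  Ssum (qvec R r1 x1) = MM R r1 x1 - 1.
Proof.
rewrite /Ssum /MM.
under eq_bigr do rewrite qentry.
rewrite -natr_sum.
rewrite -(big_mkord xpredT (fun j => if (j < x1)%N then r1 else 1 + r1 * x1)%N).
rewrite (big_cat_nat (n := x1)) //=; last by rewrite /dimq; lia.
rewrite (@eq_big_nat _ _ _ 0 x1 _ (fun=> r1)); last first.
  by move=> i /andP[_ ->].
rewrite (@eq_big_nat _ _ _ x1 (dimq r1 x1) _ (fun=> (1 + r1 * x1)%N)); last first.
  by move=> i /andP[h _]; rewrite ltnNge h.
rewrite !sum_nat_const_nat /dimq.
have -> : ((x1 - 0) * r1 + (x1 + r1 - 1 - x1) * (1 + r1 * x1))%N
   = ((r1 * (1 + r1 * x1)) - 1)%N.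
  case: r1 hr1 => [|s] // _. rewrite subn0.
  have -> : (x1 + s.+1 - 1 - x1 = s)%N by lia.
  nia.
rewrite natrB //. rewrite muln_gt0; lia.
Qed.

Lemma qc (R : realType) r1 x1 (k : 'I_(dimq r1 x1)) :
  qvec R r1 x1 0 k * (1 + cc R r1 x1 k) = MM R r1 x1.
Proof.
rewrite mxE /cc /MM; case: ifP => _; rewrite !natrM !natrD; ring.
Qed.

Lemma cc_ge1 (R : realType) r1 x1 (hr1 : (2 <= r1)%N) (hx1 : (1 <= x1)%N)
  (k : 'I_(dimq r1 x1)) : 1 <= cc R r1 x1 k.
Proof.
rewrite /cc; case: ifP => _.
  by rewrite ler1n muln_gt0; apply/andP; split; lia.
rewrite lerBrDr -[1 + 1](natrD _ 1 1) ler_nat; lia.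
Qed.

Lemma MM_gt1 (R : realType) r1 x1 (hr1 : (2 <= r1)%N) : 1 < MM R r1 x1.
Proof. rewrite /MM ltr1n; nia. Qed.

Lemma lam_lin (R : realType) r1 x1 k (w : option 'I_(dimq r1 x1) -> R) :
  lam R r1 x1 k (\sum_i w i *: vertq R r1 x1 i)
  = \sum_i w i * lam R r1 x1 k (vertq R r1 x1 i).
Proof.
have HS : forall (v : option 'I_(dimq r1 x1) -> 'rV[R]_(dimq r1 x1)),
    Ssum (\sum_i w i *: v i) = \sum_i w i * Ssum (v i).
  move=> v; rewrite /Ssum.
  under eq_bigr do rewrite summxE.
  rewrite exchange_big; apply: eq_bigr => i _; rewrite mulr_sumr.
  by apply: eq_bigr => j _; rewrite mxE.
case: k => [k|]; last exact: HS.
rewrite lamS HS summxE.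
under [X in _ - _ * X]eq_bigr do rewrite mxE.
rewrite mulr_sumr -sumrB; apply: eq_bigr => i _; rewrite lamS; ring.
Qed.

Lemma vert_le (R : realType) r1 x1 (hr1 : (2 <= r1)%N) (hx1 : (1 <= x1)%N) k i :
  lam R r1 x1 k (vertq R r1 x1 i) <= 1.
Proof.
have HM := @MM_gt1 R r1 x1 hr1.
case: k => [k|]; case: i => [i|].
- rewrite lamS Ssum_delta delta_entry.
  have := @cc_ge1 R r1 x1 hr1 hx1 k.
  have : (0:R) <= (k == i)%:R by rewrite ler0n.
  nra.
- rewrite lamS SsumN sumq // mxE.
  rewrite mulrN opprK mulrC qc; lra.
- by rewrite lamN Ssum_delta.
- rewrite lamN SsumN sumq //; lra.
Qed.

Unset Implicit Arguments.

Theorem proposition2p1 (R : realType) (r1 x1 : nat)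
    (hr1 : (2 <= r1)%N) (hx1 : (1 <= x1)%N) :
  (* H-description: Delta_(1,q) = { t | lambda_k(t) <= 1 for all k } *)
  (forall t : 'rV[R]_(dimq r1 x1),
     in_conv (vertq R r1 x1) t <-> (forall k, lam R r1 x1 k t <= 1))
  /\
  (* irredundancy: dropping any single inequality enlarges the set *)
  (forall k : option 'I_(dimq r1 x1),
     exists t : 'rV[R]_(dimq r1 x1),
       (forall k', k' != k -> lam R r1 x1 k' t <= 1) /\ 1 < lam R r1 x1 k t).
Proof.
have HM := @MM_gt1 R r1 x1 hr1.
have HM0 : MM R r1 x1 != 0 by apply/eqP => h; rewrite h in HM; lra.
split.
  move=> t; split.
    move=> [w [w0 [w1 ->]]] k.
    rewrite lam_lin -w1; apply: ler_sum => i _.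
    rewrite -[X in _ <= X]mulr1; apply: ler_wpM2l => //.
    exact: vert_le.
  move=> hl.
  set u := (1 - Ssum t) / MM R r1 x1.
  have hu : MM R r1 x1 * u = 1 - Ssum t by rewrite /u mulrC divfK.
  exists (fun i => match i with None => u | Some j => t 0 j + qvec R r1 x1 0 j * u end).
  split; [|split].
  - case=> [j|].
    + have hc := @cc_ge1 R r1 x1 hr1 hx1 j.
      have hlj := hl (Some j); rewrite lamS in hlj.
      rewrite -(@pmulr_rge0 _ (1 + cc R r1 x1 j)); last lra.
      rewrite mulrDr [X in _ + X]mulrCA [X in _ + X]mulrA qc hu; lra.
    + have := hl None; rewrite lamN => h.
      rewrite /u divr_ge0 //; lra.
  - rewrite big_opt big_split /= -mulr_suml -/(Ssum t) -/(Ssum _) sumq //.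
    rewrite mulrBl mul1r hu; ring.
  - apply/matrixP => i0 j; rewrite ord1 summxE big_opt /= !mxE.
    rewrite (bigD1 j) //= big1; last first.
      by move=> i hi; rewrite mxE delta_entry eq_sym (negbTE hi) mulr0.
    rewrite mxE delta_entry eqxx mulr1 addr0 qentry; case: ifP => _; ring.
case=> [j|].
- exists ((-2) *: delta_mx 0 j); split.
    case=> [i|] hi.
    + have hij : i != j by apply: contraNneq hi => ->.
      rewrite lamS SsumZ Ssum_delta mxE delta_entry (negbTE hij) mulr0 mulr0; lra.
    + rewrite lamN SsumZ Ssum_delta; lra.
  rewrite lamS SsumZ Ssum_delta mxE delta_entry eqxx mulr1.
  have := @cc_ge1 R r1 x1 hr1 hx1 j; lra.
- set a : R := 2 / (MM R r1 x1 - 1).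
  have ha : 0 < a by rewrite /a divr_gt0 //; lra.
  have haM : a * (MM R r1 x1 - 1) = 2 by rewrite /a divfK //; apply/eqP; lra.
  exists (a *: qvec R r1 x1); split.
    case=> [i|] hi //.
    rewrite lamS SsumZ sumq // mxE mulrCA [(1 + _) * _]mulrC qc; nra.
  rewrite lamN SsumZ sumq //; lra.
Qed.
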